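(* Let $\mathcal{C}$ be a d-category and $\mathrm{Rat}(\mathcal{C})$ the class of rational $\mathcal{C}$-languages. Then $(\mathrm{Rat}(\mathcal{C}),+,\emptyset,*,(-)^+)$ is a non-unital Kleene algebra: $\mathrm{Rat}(\mathcal{C})$ contains $\emptyset$ and is closed under $+$, $*$ and $(-)^+$; $+$ is associative, commutative, idempotent with unit $\emptyset$; $*$ is associative, distributes over $+$ on both sides, and $\emptyset$ is absorbing for $*$; and for all $L,M\in\mathrm{Rat}(\mathcal{C})$: $L+L^+*L^+\subseteq L^+$, and $L+M*M\subseteq M$ implies $L^+\subseteq M$.
   Context: A d-category is a small category $\mathcal{C}$ with wide subcategories $\mathcal{C}^+$ (formorphisms) and $\mathcal{C}^-$ (backmorphisms) such that an invertible $\varphi$ is in $\mathcal{C}^+$ iff $\varphi^{-1}\in\mathcal{C}^-$. A $\mathcal{C}$-automaton is a presheaf $X:\mathcal{C}^{op}\to\mathbf{Set}$ with sets of start and accept elements; morphisms preserve them. Simple automata have exactly one start and one accept element, lying over $\mathrm{src}(X),\mathrm{tgt}(X)$; for simple $X,Y$ with $\mathrm{tgt}X=\mathrm{src}Y=U$, $X*Y$ is the pushout of $X\leftarrow\mathcal{C}(-,U)\to Y$ (along accept of $X$, start of $Y$) with start from $X$ and accept from $Y$. A linear category is a bipointed d-category isomorphic to a finite (possibly empty) concatenation (gluing $\top$ to $\bot$) of $\mathbf S$ (formorphism $\bot\to\top$), $\mathbf T$ (backmorphism $\top\to\bot$), $\mathbf I$ (inverse pair); a path is a d-functor $\omega:\mathcal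 I\to\mathcal{C}$ from one; its track object is $\operatorname{colim}_i\mathcal{C}(-,\omega(i))$ with start element image of $\mathrm{id}_{\omega(\bot)}$, accept element image of $\mathrm{id}_{\omega(\top)}$; track objects are automata isomorphic to such. $\Delta\sqsubseteq\Gamma$ if there is an automaton morphism $\Delta\to\Gamma$. A $\mathcal{C}$-language is a class of track objects down-closed under $\sqsubseteq$; $A{\downarrow}$ is down-closure. $\iota_U$: $\mathcal{C}(-,U)$ with start and accept $\mathrm{id}_U$; $1_{\mathcal{C}}=\{\iota_U\}{\downarrow}$. Operations: $L+M=L\cup M$; $L*M=\{\Gamma*\Delta\mid\Gamma\in L,\Delta\in M,\mathrm{tgt}\Gamma=\mathrm{src}\Delta\}{\downarrow}$; $L^0=1_{\mathcal{C}}$, $L^{k+1}=L*L^k$, $L^+=\bigcup_{n\ge1}L^n$. Atomic languages are $\{\Gamma\}{\downarrow}$ for a track object $\Gamma$; $\mathrm{Rat}(\mathcal{C})$ is the smallest class of languages containing $\emptyset$ and all atomic languages and closed under $+$, $*$, $(-)^+$. *)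

(* Defs.v *)
From Stdlib Require Import List Arith.

Record cat := Cat {
  Ob : Type;
  Hom : Ob -> Ob -> Type;
  idm : forall a, Hom a a;
  comp : forall a b c, Hom b c -> Hom a b -> Hom a c;   (* comp g f = g o f *)
  comp_id_l : forall a b (f : Hom a b), comp a b b (idm b) f = f;
  comp_id_r : forall a b (f : Hom a b), comp a a b f (idm a) = f;
  comp_assoc : forall a b c d (f : Hom a b) (g : Hom b c) (h : Hom c d),
      comp a c d h (comp a b c g f) = comp a b d (comp b c d h g) f }.
Arguments Hom {_} _ _.
Arguments idm {_} _.
Arguments comp {_ a b _} _ _.

Record dcat := DCat {
  dc :> cat;
  isF : forall a b : Ob dc, Hom a b -> Prop;
  isB : forall a b : Ob dc, Hom a b -> Prop;
  isF_id : forall a : Ob dc, isF a a (idm a);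
  isF_comp : forall (a b c : Ob dc) (f : Hom a b) (g : Hom b c),
      isF a b f -> isF b c g -> isF a c (comp g f);
  isB_id : forall a : Ob dc, isB a a (idm a);
  isB_comp : forall (a b c : Ob dc) (f : Hom a b) (g : Hom b c),
      isB a b f -> isB b c g -> isB a c (comp g f);
  isF_inv_isB : forall (a b : Ob dc) (f : Hom a b) (g : Hom b a),
      comp g f = idm a -> comp f g = idm b -> (isF a b f <-> isB b a g) }.
Arguments isF {d a b} _.
Arguments isB {d a b} _.

Record presheaf (C : cat) := Presheaf {
  pob :> Ob C -> Type;
  pact : forall U V : Ob C, Hom U V -> pob V -> pob U;
  pact_id : forall U (x : pob U), pact U U (idm U) x = x;
  pact_comp : forall U V W (f : Hom U V) (g : Hom V W) (x : pob W),
      pact U W (comp g f) x = pact U V f (pact V W g x) }.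
Arguments pact {C} p {U V} _ _.

Definition repr (C : cat) (c : Ob C) : presheaf C :=
  @Presheaf C (fun U => Hom U c) (fun U V f g => comp g f)
    (fun U x => comp_id_r C U c x)
    (fun U V W f g x => comp_assoc C U V W c f g x).

Record nattrans (C : cat) (X Y : presheaf C) := NatTrans {
  nt :> forall U, X U -> Y U;
  nt_nat : forall U V (f : Hom U V) (x : X V),
      nt U (pact X f x) = pact Y f (nt V x) }.
Arguments nattrans {C} _ _.
Arguments nt {C X Y} _ _ _.

Record automaton (C : cat) := Automaton {
  apsh :> presheaf C;
  astart : {U : Ob C & apsh U} -> Prop;
  aacc : {U : Ob C & apsh U} -> Prop }.
Arguments astart {C} _ _.
Arguments apsh {C} _.
Arguments aacc {C} _ _.

Record autmor (C : cat) (X Y : automaton C) := AutMor {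
  am :> nattrans X Y;
  am_start : forall U (x : X U),
      astart X (existT _ U x) -> astart Y (existT _ U (am U x));
  am_acc : forall U (x : X U),
      aacc X (existT _ U x) -> aacc Y (existT _ U (am U x)) }.

Arguments autmor {C} _ _.

Definition sqsub (C : cat) (X Y : automaton C) : Prop := inhabited (autmor X Y).

Definition simple (C : cat) (X : automaton C) : Prop :=
  (exists s, forall e, astart X e <-> e = s) /\
  (exists a, forall e, aacc X e <-> e = a).

Arguments sqsub {C} _ _.
Arguments simple {C} _.

Definition iota_aut (C : cat) (U : Ob C) : automaton C :=
  @Automaton C (repr C U)
    (fun e => e = existT (fun V => repr C U V) U (idm U))
    (fun e => e = existT (fun V => repr C U V) U (idm U)).

Arguments iota_aut {C} _.

(* A linear category is (up to isomorphism) a concatenation of letters: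
   S (formorphism bot -> top), T (backmorphism top -> bot),
   I (inverse pair; the arrow bot -> top is a formorphism and its inverse a
   backmorphism).  For a word w of length n the concatenation has objects
   0..n and is thin: there is a (unique) morphism i -> j iff
   i <= j and all steps in [i,j) are S or I, or j <= i and all steps in
   [j,i) are T or I.  Its formorphisms are the morphisms i -> j with
   i <= j, its backmorphisms those with j <= i. *)
Inductive letter := LS | LT | LI.

Definition fwd (l : letter) : Prop := l = LS \/ l = LI.
Definition bwd (l : letter) : Prop := l = LT \/ l = LI.

Definition reach (w : list letter) (i j : nat) : Prop :=
  i <= length w /\ j <= length w /\
  (i <= j -> forall k, i <= k < j -> fwd (nth k w LI)) /\
  (j <= i -> forall k, j <= k < i -> bwd (nth k w LI)).

(* A path: a d-functor from the linear category of the word pw to C. *)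
Record path (C : dcat) := Path {
  pw : list letter;
  po : nat -> Ob C;                      (* relevant for 0 <= i <= length pw *)
  ph : forall i j, reach pw i j -> Hom (po i) (po j);
  ph_id : forall i (r : reach pw i i), ph i i r = idm (po i);
  ph_comp : forall i j k (r1 : reach pw i j) (r2 : reach pw j k)
      (r3 : reach pw i k), ph i k r3 = comp (ph j k r2) (ph i j r1);
  ph_F : forall i j (r : reach pw i j), i <= j -> isF (ph i j r);
  ph_B : forall i j (r : reach pw i j), j <= i -> isB (ph i j r) }.
Arguments pw {C} _.
Arguments po {C} _ _.
Arguments ph {C} _ {i j} _.

Definition plen {C : dcat} (p : path C) : nat := length (pw p).

Definition is_track_colimit {C : dcat} (p : path C) (X : presheaf C)
    (iota : forall i, nattrans (repr C (po p i)) X) : Prop :=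
  (forall i j (r : reach (pw p) i j) U (g : Hom U (po p i)),
      iota j U (comp (ph p r) g) = iota i U g) /\
  (forall (W : presheaf C) (tau : forall i, nattrans (repr C (po p i)) W),
     (forall i j (r : reach (pw p) i j) U (g : Hom U (po p i)),
        tau j U (comp (ph p r) g) = tau i U g) ->
     (exists u : nattrans X W, forall i, i <= plen p ->
         forall U (g : Hom U (po p i)), u U (iota i U g) = tau i U g) /\
     (forall u1 u2 : nattrans X W,
        (forall i, i <= plen p -> forall U (g : Hom U (po p i)),
            u1 U (iota i U g) = tau i U g) ->
        (forall i, i <= plen p -> forall U (g : Hom U (po p i)),
            u2 U (iota i U g) = tau i U g) ->
        forall U x, u1 U x = u2 U x)).

(* track objects: automata isomorphic to the track object of a path,
   i.e. a colimit as above with start element iota_0(id) and accept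
   element iota_n(id). *)
Definition is_track {C : dcat} (X : automaton C) : Prop :=
  exists (p : path C) (iota : forall i, nattrans (repr C (po p i)) X),
    is_track_colimit p X iota /\
    (forall e, astart X e <->
        e = existT _ (po p 0) (iota 0 (po p 0) (idm (po p 0)))) /\
    (forall e, aacc X e <->
        e = existT _ (po p (plen p))
              (iota (plen p) (po p (plen p)) (idm (po p (plen p))))).

(* Z is (a choice of) X * Y: X, Y simple, the accept element a of X and
   the start element b of Y lie over the same object U, and Z is a pushout
   of X <- C(-,U) -> Y (the maps being the Yoneda maps of a and b), with
   start elements the image of those of X and accept elements the image of
   those of Y. *)
Definition is_concat {C : dcat} (X Y Z : automaton C) : Prop :=
  simple X /\ simple Y /\
  exists (U : Ob C) (a : X U) (b : Y U),
    aacc X (existT _ U a) /\ astart Y (existT _ U b) /\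
    exists (p : nattrans X Z) (q : nattrans Y Z),
      (forall V (g : Hom V U), p V (pact X g a) = q V (pact Y g b)) /\
      (forall (W : presheaf C) (p' : nattrans X W) (q' : nattrans Y W),
         (forall V (g : Hom V U), p' V (pact X g a) = q' V (pact Y g b)) ->
         (exists u : nattrans Z W,
             (forall V x, u V (p V x) = p' V x) /\
             (forall V y, u V (q V y) = q' V y)) /\
         (forall u1 u2 : nattrans Z W,
             (forall V x, u1 V (p V x) = p' V x) ->
             (forall V y, u1 V (q V y) = q' V y) ->
             (forall V x, u2 V (p V x) = p' V x) ->
             (forall V y, u2 V (q V y) = q' V y) ->
             forall V z, u1 V z = u2 V z)) /\
      (forall e, astart Z e <->
          exists V x, astart X (existT _ V x) /\ e = existT _ V (p V x)) /\
      (forall e, aacc Z e <->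
          exists V y, aacc Y (existT _ V y) /\ e = existT _ V (q V y)).

Definition lang (C : dcat) := automaton C -> Prop.

Definition is_language {C : dcat} (L : lang C) : Prop :=
  (forall X, L X -> is_track X) /\
  (forall X Y, is_track X -> sqsub X Y -> L Y -> L X).

Definition down {C : dcat} (A : automaton C -> Prop) : lang C :=
  fun D => is_track D /\ exists G, A G /\ sqsub D G.

Definition lempty (C : dcat) : lang C := fun _ => False.
Definition lplus {C : dcat} (L M : lang C) : lang C := fun X => L X \/ M X.
Definition lmul {C : dcat} (L M : lang C) : lang C :=
  down (fun Z => exists G D, L G /\ M D /\ is_concat G D Z).
Definition lone (C : dcat) : lang C :=
  down (fun Z => exists U : Ob C, Z = iota_aut U).
Fixpoint lpow {C : dcat} (L : lang C) (n : nat) : lang C :=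
  match n with
  | 0 => lone C
  | S k => lmul L (lpow L k)
  end.
Definition lplusstar {C : dcat} (L : lang C) : lang C :=
  fun X => exists n, 1 <= n /\ lpow L n X.
Definition latom {C : dcat} (G : automaton C) : lang C :=
  down (fun Z => Z = G).

Definition lsub {C : dcat} (L M : lang C) : Prop := forall X, L X -> M X.
Definition leqv {C : dcat} (L M : lang C) : Prop := forall X, L X <-> M X.

(* Rat(C): smallest class of languages containing the empty language and
   the atomic languages, closed under +, *, (-)^+ (classes of languages
   being extensional, it is closed under equality of languages). *)
Inductive Rat {C : dcat} : lang C -> Prop :=
| Rat_empty : Rat (@lempty C)
| Rat_atom : forall G, is_track G -> Rat (latom G)
| Rat_plus : forall L M, Rat L -> Rat M -> Rat (lplus L M)
| Rat_mul : forall L M, Rat L -> Rat M -> Rat (lmul L M)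
| Rat_plusstar : forall L, Rat L -> Rat (lplusstar L)
| Rat_ext : forall L M, Rat L -> leqv L M -> Rat M.

(* Main.v *)
Require Import Defs.
From Stdlib Require Import List Arith Lia.
From Stdlib Require Import ProofIrrelevance FunctionalExtensionality PropExtensionality ClassicalEpsilon Eqdep.

Definition nt_id {C : cat} (X : presheaf C) : nattrans X X :=
  NatTrans C X X (fun U x => x) (fun U V f x => eq_refl).

Definition nt_comp {C : cat} {X Y W : presheaf C} (u : nattrans Y W) (t : nattrans X Y)
  : nattrans X W.
Proof.
  refine (NatTrans C X W (fun U x => u U (t U x)) _).
  intros; rewrite !nt_nat; reflexivity.
Defined.

Definition ypre {C : cat} {A B : Ob C} {W : presheaf C} (m : Hom B A)
  (t : nattrans (repr C A) W) : nattrans (repr C B) W.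
Proof.
  refine (NatTrans C (repr C B) W (fun V g => t V (comp m g)) _).
  intros U V f g. simpl. rewrite <- (nt_nat C _ _ t). simpl. rewrite comp_assoc. reflexivity.
Defined.

Definition yon {C : cat} {X : presheaf C} {A : Ob C} (x : X A) : nattrans (repr C A) X.
Proof.
  refine (NatTrans C (repr C A) X (fun V g => pact X g x) _).
  intros U V f g. simpl. apply pact_comp.
Defined.

Definition ch {C : cat} {A B : Ob C} (e : A = B) : Hom A B :=
  match e in _ = B' return Hom A B' with eq_refl => idm A end.

Lemma ch_irr {C : cat} {A B : Ob C} (e e' : A = B) : ch e = ch e'.
Proof. rewrite (proof_irrelevance _ e e'); reflexivity. Qed.

Lemma ch_refl {C : cat} {A : Ob C} (e : A = A) : ch e = idm A.
Proof. rewrite (proof_irrelevance _ e eq_refl); reflexivity. Qed.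

Lemma ch_ch {C : cat} {A B D : Ob C} (e1 : A = B) (e2 : B = D) :
  comp (ch e2) (ch e1) = ch (eq_trans e1 e2).
Proof. destruct e2, e1. simpl. apply comp_id_l. Qed.

Lemma ch_ch' {C : cat} {A B D E : Ob C} (e1 : A = B) (e2 : B = D) (x : Hom E A) :
  comp (ch e2) (comp (ch e1) x) = comp (ch (eq_trans e1 e2)) x.
Proof. rewrite comp_assoc, ch_ch. reflexivity. Qed.

Lemma comp_assoc' {C : cat} {a b c d : Ob C} (f : Hom a b) (g : Hom b c) (h : Hom c d) :
  comp (comp h g) f = comp h (comp g f).
Proof. symmetry; apply comp_assoc. Qed.

Lemma comp_id_l' {C : cat} {a b : Ob C} (f : Hom a b) : comp (idm b) f = f.
Proof. apply comp_id_l. Qed.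
Lemma comp_id_r' {C : cat} {a b : Ob C} (f : Hom a b) : comp f (idm a) = f.
Proof. apply comp_id_r. Qed.

Ltac cnorm := repeat (rewrite ?comp_assoc', ?ch_ch', ?ch_ch, ?ch_refl, ?comp_id_l', ?comp_id_r').

Lemma sig_ch {C : cat} (Z : presheaf C) {A B : Ob C} (e : A = B) (y : Z B) :
  existT (fun V => Z V) B y = existT (fun V => Z V) A (pact Z (ch e) y).
Proof. destruct e. simpl. rewrite pact_id. reflexivity. Qed.

Lemma sig_inv {C : cat} (Z : presheaf C) {A B : Ob C} (x : Z A) (y : Z B) :
  existT (fun V => Z V) A x = existT (fun V => Z V) B y ->
  exists e : A = B, x = pact Z (ch e) y.
Proof.
  intro H. pose proof (f_equal (@projT1 _ _) H) as e. simpl in e. subst B.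
  apply inj_pair2 in H. exists eq_refl. simpl. rewrite pact_id. exact H.
Qed.

Lemma sig_same {C : cat} (Z : presheaf C) {A : Ob C} (x y : Z A) :
  existT (fun V => Z V) A x = existT (fun V => Z V) A y -> x = y.
Proof. apply inj_pair2. Qed.

Lemma yon_nat {C : cat} {A : Ob C} {X : presheaf C} (t : nattrans (repr C A) X)
  {V W : Ob C} (f : Hom V W) (g : Hom W A) :
  pact X f (t W g) = t V (comp g f).
Proof. rewrite <- nt_nat. reflexivity. Qed.

Lemma fam_shift {C : cat} (po : nat -> Ob C) (W : presheaf C)
  (F : forall i, nattrans (repr C (po i)) W) i i' (e : i' = i) V x :
  F i' V x = F i V (comp (ch (f_equal po e)) x).
Proof. subst. simpl. rewrite comp_id_l. reflexivity. Qed.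

Lemma fam_sig {C : cat} (po : nat -> Ob C) (W : presheaf C)
  (F : forall i, nattrans (repr C (po i)) W) i i' (e : i' = i) :
  existT (fun V => W V) (po i') (F i' (po i') (idm _)) =
  existT (fun V => W V) (po i) (F i (po i) (idm _)).
Proof. subst. reflexivity. Qed.

Definition am_id {C : cat} (X : automaton C) : autmor X X :=
  AutMor C X X (nt_id X) (fun U x h => h) (fun U x h => h).

Definition am_comp {C : cat} {X Y Z : automaton C} (g : autmor Y Z) (f : autmor X Y) : autmor X Z.
Proof.
  refine (AutMor C X Z (nt_comp g f) _ _); intros U x h; simpl.
  - apply (am_start C Y Z g). apply (am_start C X Y f). exact h.
  - apply (am_acc C Y Z g). apply (am_acc C X Y f). exact h.
Defined.

Lemma sqsub_refl {C : cat} (X : automaton C) : sqsub X X.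
Proof. constructor. apply am_id. Qed.

Lemma sqsub_trans {C : cat} (X Y Z : automaton C) : sqsub X Y -> sqsub Y Z -> sqsub X Z.
Proof. intros [f] [g]. constructor. exact (am_comp g f). Qed.

Lemma down_lang {C : dcat} (A : automaton C -> Prop) : is_language (down A).
Proof.
  split.
  - intros X [h _]; exact h.
  - intros X Y hX hXY [hY [G [hG hYG]]]. split; [exact hX|].
    exists G; split; [exact hG| eapply sqsub_trans; eauto].
Qed.

Lemma lang_ext {C : dcat} (L M : lang C) : is_language L -> leqv L M -> is_language M.
Proof.
  intros [h1 h2] e. split.
  - intros X hX; apply h1, e, hX.
  - intros X Y hX hXY hY. apply e. eapply h2; eauto. apply e; exact hY.
Qed.

Lemma lpow_lang {C : dcat} (L : lang C) n : is_language (lpow L n).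
Proof. destruct n; apply down_lang. Qed.

Lemma Rat_lang {C : dcat} (L : lang C) : Rat L -> is_language L.
Proof.
  induction 1.
  - split; intros; contradiction.
  - apply down_lang.
  - destruct IHRat1 as [a1 a2], IHRat2 as [b1 b2]. split.
    + intros X [h|h]; eauto.
    + intros X Y hX hXY [h|h]; [left|right]; eauto.
  - apply down_lang.
  - split.
    + intros X [n [_ h]]. exact (proj1 (lpow_lang L n) X h).
    + intros X Y hX hXY [n [hn h]]. exists n; split; [exact hn|].
      exact (proj2 (lpow_lang L n) X Y hX hXY h).
  - eapply lang_ext; eauto.
Qed.

Lemma lmul_mono {C : dcat} (L L' M M' : lang C) :
  lsub L L' -> lsub M M' -> lsub (lmul L M) (lmul L' M').
Proof.
  intros h1 h2 X [hX [Z [[G [D [hG [hD hc]]]] hXZ]]].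
  split; [exact hX|]. exists Z; split; [|exact hXZ].
  exists G, D; split; [apply h1; exact hG|split; [apply h2; exact hD|exact hc]].
Qed.

Definition sact {C : cat} (X Y : presheaf C) {U V : Ob C} (f : Hom U V) (s : (X V + Y V)%type)
  : (X U + Y U)%type :=
  match s with inl x => inl (pact X f x) | inr y => inr (pact Y f y) end.

Inductive prel {C : cat} {X Y : presheaf C} {U : Ob C} (a : X U) (b : Y U) (V : Ob C)
  : (X V + Y V)%type -> (X V + Y V)%type -> Prop :=
| pr_base : forall g : Hom V U, prel a b V (inl (pact X g a)) (inr (pact Y g b))
| pr_refl : forall s, prel a b V s s
| pr_sym : forall s t, prel a b V s t -> prel a b V t s
| pr_trans : forall s t w, prel a b V s t -> prel a b V t w -> prel a b V s w.

Lemma prel_nat {C : cat} {X Y : presheaf C} {U : Ob C} (a : X U) (b : Y U) V V'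
  (f : Hom V' V) s t : prel a b V s t -> prel a b V' (sact X Y f s) (sact X Y f t).
Proof.
  induction 1; simpl.
  - rewrite <- !pact_comp. apply pr_base.
  - apply pr_refl.
  - apply pr_sym; auto.
  - eapply pr_trans; eauto.
Qed.

Definition Qt {C : cat} {X Y : presheaf C} {U : Ob C} (a : X U) (b : Y U) (V : Ob C) :=
  {c : (X V + Y V)%type -> Prop | exists s, c = prel a b V s}.

Definition qpi {C : cat} {X Y : presheaf C} {U : Ob C} (a : X U) (b : Y U) V s : Qt a b V :=
  exist _ (prel a b V s) (ex_intro _ s eq_refl).

Lemma Qt_eq {C : cat} {X Y : presheaf C} {U : Ob C} (a : X U) (b : Y U) V (c1 c2 : Qt a b V) :
  proj1_sig c1 = proj1_sig c2 -> c1 = c2.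
Proof. destruct c1, c2; simpl; intros ->; f_equal; apply proof_irrelevance. Qed.

Lemma Qt_surj {C : cat} {X Y : presheaf C} {U : Ob C} (a : X U) (b : Y U) V (c : Qt a b V) :
  exists s, c = qpi a b V s.
Proof. destruct c as [c [s e]]. exists s. apply Qt_eq. simpl. exact e. Qed.

Lemma qpi_eq {C : cat} {X Y : presheaf C} {U : Ob C} (a : X U) (b : Y U) V s t :
  qpi a b V s = qpi a b V t -> prel a b V s t.
Proof.
  intro h. apply (f_equal (@proj1_sig _ _)) in h. simpl in h.
  rewrite h. apply pr_refl.
Qed.

Definition qact {C : cat} {X Y : presheaf C} {U : Ob C} (a : X U) (b : Y U) V V'
  (f : Hom V' V) (c : Qt a b V) : Qt a b V'.
Proof.
  refine (exist _ (fun t => exists s, proj1_sig c s /\ prel a b V' (sact X Y f s) t) _).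
  destruct c as [c [s0 e]]. exists (sact X Y f s0). simpl. subst c.
  apply functional_extensionality; intro t. apply propositional_extensionality. split.
  - intros [s [h1 h2]]. eapply pr_trans; [|exact h2]. apply prel_nat; exact h1.
  - intro h. exists s0; split; [apply pr_refl|exact h].
Defined.

Lemma qact_pi {C : cat} {X Y : presheaf C} {U : Ob C} (a : X U) (b : Y U) V V' (f : Hom V' V) s :
  qact a b V V' f (qpi a b V s) = qpi a b V' (sact X Y f s).
Proof.
  apply Qt_eq; simpl. apply functional_extensionality; intro t. apply propositional_extensionality. split.
  - intros [s' [h1 h2]]. eapply pr_trans; [|exact h2]. apply prel_nat; exact h1.
  - intro h. exists s; split; [apply pr_refl|exact h].
Qed.

Definition Qpsh {C : cat} {X Y : presheaf C} {U : Ob C} (a : X U) (b : Y U) : presheaf C.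
Proof.
  refine (Presheaf C (Qt a b) (fun V' V f c => qact a b V V' f c) _ _).
  - intros V c. destruct (Qt_surj a b V c) as [s ->]. rewrite qact_pi.
    f_equal. destruct s; simpl; rewrite pact_id; reflexivity.
  - intros U1 V W f g c. destruct (Qt_surj a b W c) as [s ->]. rewrite !qact_pi.
    f_equal. destruct s; simpl; rewrite pact_comp; reflexivity.
Defined.

Definition qinl {C : cat} {X Y : presheaf C} {U : Ob C} (a : X U) (b : Y U) : nattrans X (Qpsh a b).
Proof.
  refine (NatTrans C X (Qpsh a b) (fun V x => qpi a b V (inl x)) _).
  intros V V' f x. simpl. rewrite qact_pi. reflexivity.
Defined.

Definition qinr {C : cat} {X Y : presheaf C} {U : Ob C} (a : X U) (b : Y U) : nattrans Y (Qpsh a b).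
Proof.
  refine (NatTrans C Y (Qpsh a b) (fun V y => qpi a b V (inr y)) _).
  intros V V' f y. simpl. rewrite qact_pi. reflexivity.
Defined.

Lemma push_univ {C : cat} {X Y : presheaf C} {U : Ob C} (a : X U) (b : Y U) :
      (forall (W : presheaf C) (p' : nattrans X W) (q' : nattrans Y W),
         (forall V (g : Hom V U), p' V (pact X g a) = q' V (pact Y g b)) ->
         (exists u : nattrans (Qpsh a b) W,
             (forall V x, u V (qinl a b V x) = p' V x) /\
             (forall V y, u V (qinr a b V y) = q' V y)) /\
         (forall u1 u2 : nattrans (Qpsh a b) W,
             (forall V x, u1 V (qinl a b V x) = p' V x) ->
             (forall V y, u1 V (qinr a b V y) = q' V y) ->
             (forall V x, u2 V (qinl a b V x) = p' V x) ->
             (forall V y, u2 V (qinr a b V y) = q' V y) ->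
             forall V z, u1 V z = u2 V z)).
Proof.
  intros W p' q' glue.
  set (h := fun V (s : (X V + Y V)%type) => match s with inl x => p' V x | inr y => q' V y end).
  assert (hresp : forall V s t, prel a b V s t -> h V s = h V t).
  { induction 1; simpl; auto. congruence. }
  assert (hnat : forall V V' (f : Hom V' V) s, h V' (sact X Y f s) = pact W f (h V s)).
  { intros; destruct s; simpl; apply nt_nat. }
  split.
  - set (rep := fun V (c : Qt a b V) =>
                  proj1_sig (constructive_indefinite_description _ (proj2_sig c))).
    assert (rep_spec : forall V s, prel a b V s (rep V (qpi a b V s))).
    { intros V s. unfold rep.
      destruct (constructive_indefinite_description _ (proj2_sig (qpi a b V s))) as [s' e].
      simpl in *. rewrite e. apply pr_refl. }
    assert (key : forall V s, h V (rep V (qpi a b V s)) = h V s).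
    { intros; symmetry; apply hresp, rep_spec. }
    unshelve eexists (NatTrans C (Qpsh a b) W (fun V c => h V (rep V c)) _).
    + intros V' V f c. simpl. destruct (Qt_surj a b V c) as [s ->].
      rewrite qact_pi, !key. apply hnat.
    + split; intros; simpl; rewrite key; reflexivity.
  - intros u1 u2 h1 h2 h3 h4 V z. destruct (Qt_surj a b V z) as [[x|y] ->].
    + change (qpi a b V (inl x)) with (qinl a b V x). rewrite h1, h3. reflexivity.
    + change (qpi a b V (inr y)) with (qinr a b V y). rewrite h2, h4. reflexivity.
Qed.

Definition sigmap {C : cat} {X Y : presheaf C} (u : nattrans X Y) (e : {V : Ob C & X V})
  : {V : Ob C & Y V} := existT _ (projT1 e) (u _ (projT2 e)).

Definition push_aut {C : cat} (X Y : automaton C) {U : Ob C} (a : X U) (b : Y U) : automaton C :=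
  Automaton C (Qpsh a b)
    (fun e => exists V x, astart X (existT _ V x) /\ e = existT _ V (qinl a b V x))
    (fun e => exists V y, aacc Y (existT _ V y) /\ e = existT _ V (qinr a b V y)).

Lemma pushout_ex {C : dcat} (X Y : automaton C) (U : Ob C) (a : X U) (b : Y U) :
  simple X -> simple Y -> aacc X (existT _ U a) -> astart Y (existT _ U b) ->
  exists Z, is_concat X Y Z.
Proof.
  intros sX sY ha hb. exists (push_aut X Y a b).
  split; [exact sX|]. split; [exact sY|].
  exists U, a, b. split; [exact ha|]. split; [exact hb|].
  exists (qinl a b), (qinr a b). split.
  - intros V g. simpl. apply Qt_eq. simpl. apply functional_extensionality; intro t.
    apply propositional_extensionality. split; intro h.
    + eapply pr_trans; [|exact h]. apply pr_sym, pr_base.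
    + eapply pr_trans; [|exact h]. apply pr_base.
  - split; [apply push_univ|]. split; intro e; simpl; tauto.
Qed.

Lemma img_inv {C : cat} {X Z : presheaf C} (P : nattrans X Z) (S : {V : Ob C & X V} -> Prop) V z :
  (exists V' x, S (existT _ V' x) /\ existT (fun V => Z V) V z = existT _ V' (P V' x)) ->
  exists x, S (existT _ V x) /\ z = P V x.
Proof.
  intros [V' [x [h e]]]. pose proof (f_equal (@projT1 _ _) e) as e1. simpl in e1. subst V'.
  apply inj_pair2 in e. exists x; split; assumption.
Qed.

Lemma simple_start_eq {C : cat} (X : automaton C) e1 e2 :
  simple X -> astart X e1 -> astart X e2 -> e1 = e2.
Proof. intros [[s hs] _] h1 h2. apply hs in h1; apply hs in h2; congruence. Qed.

Lemma simple_acc_eq {C : cat} (X : automaton C) e1 e2 :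
  simple X -> aacc X e1 -> aacc X e2 -> e1 = e2.
Proof. intros [_ [s hs]] h1 h2. apply hs in h1; apply hs in h2; congruence. Qed.

Lemma track_simple {C : dcat} (X : automaton C) : is_track X -> simple X.
Proof.
  intros [p [iota [_ [hs ha]]]]. split; eexists; eauto.
Qed.

Lemma img_simple {C : cat} {X Z : presheaf C} (P : nattrans X Z) (S : {V : Ob C & X V} -> Prop) :
  (exists s, forall e, S e <-> e = s) ->
  exists s, forall e, (exists V x, S (existT _ V x) /\ e = existT (fun V => Z V) V (P V x)) <-> e = s.
Proof.
  intros [[V0 x0] hs]. exists (existT _ V0 (P V0 x0)). intro e. split.
  - intros [V [x [h ->]]]. apply hs in h. pose proof (f_equal (@projT1 _ _) h) as e1.
    simpl in e1. subst V. apply inj_pair2 in h. subst x. reflexivity.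
  - intros ->. exists V0, x0. split; [apply hs; reflexivity|reflexivity].
Qed.

Lemma concat_simple {C : dcat} (X Y Z : automaton C) : is_concat X Y Z -> simple Z.
Proof.
  intros [sX [sY [U [a [b [ha [hb [P [Q [glue [univ [hst hac]]]]]]]]]]]].
  split.
  - destruct (img_simple P _ (proj1 sX)) as [s hs]. exists s. intro e. rewrite hst. apply hs.
  - destruct (img_simple Q _ (proj2 sY)) as [s hs]. exists s. intro e. rewrite hac. apply hs.
Qed.

Ltac dconcat H U a b ha hb P Q glue univ hst hac :=
  destruct H as [? [? [U [a [b [ha [hb [P [Q [glue [univ [hst hac]]]]]]]]]]]].

Lemma concat_unit {C : dcat} (G D Z : automaton C) (U0 : Ob C) :
  is_concat G D Z -> sqsub D (iota_aut U0) -> sqsub Z G.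
Proof.
  intros H [m].
  pose proof H as H0.
  destruct H as [sG [sD [U [a [b [ha [hb [P [Q [glue [univ [hst hac]]]]]]]]]]]].
  pose proof (am_start C _ _ m U b hb) as hmb. simpl in hmb.
  pose proof (f_equal (@projT1 _ _) hmb) as e1. simpl in e1. subst U0.
  apply inj_pair2 in hmb.
  destruct (univ G (nt_id G) (nt_comp (yon a) m)) as [[u [hu1 hu2]] _].
  { intros V g. simpl. rewrite (nt_nat C _ _ m). cbn in hmb |- *. rewrite hmb. simpl. rewrite comp_id_l. reflexivity. }
  constructor. refine (AutMor C Z G u _ _).
  - intros V z hz. apply hst in hz. apply img_inv in hz. destruct hz as [x [hx ->]].
    rewrite hu1. exact hx.
  - intros V z hz. apply hac in hz. apply img_inv in hz. destruct hz as [y [hy ->]].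
    rewrite hu2. simpl. pose proof (am_acc C _ _ m V y hy) as h. simpl in h.
    pose proof (f_equal (@projT1 _ _) h) as e1. simpl in e1. subst V.
    apply inj_pair2 in h. rewrite h. rewrite pact_id. exact ha.
Qed.

Lemma concat_mono {C : dcat} (G D Z G' D' Z' : automaton C) :
  is_concat G D Z -> is_concat G' D' Z' -> sqsub G G' -> sqsub D D' -> sqsub Z Z'.
Proof.
  intros H H' [f] [g].
  destruct H as [sG [sD [U [a [b [ha [hb [P [Q [glue [univ [hst hac]]]]]]]]]]]].
  destruct H' as [sG' [sD' [U' [a' [b' [ha' [hb' [P' [Q' [glue' [univ' [hst' hac']]]]]]]]]]]].
  pose proof (am_acc C _ _ f U a ha) as hfa.
  pose proof (simple_acc_eq _ _ _ sG' hfa ha') as e. 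
  pose proof (f_equal (@projT1 _ _) e) as e1. simpl in e1. subst U'.
  apply inj_pair2 in e.
  pose proof (am_start C _ _ g U b hb) as hgb.
  pose proof (simple_start_eq _ _ _ sD' hgb hb') as e'. apply inj_pair2 in e'.
  destruct (univ Z' (nt_comp P' f) (nt_comp Q' g)) as [[u [hu1 hu2]] _].
  { intros V g0. simpl. rewrite (nt_nat C _ _ f), (nt_nat C _ _ g). cbn in e, e' |- *. rewrite e, e'. apply glue'. }
  constructor. refine (AutMor C Z Z' u _ _).
  - intros V z hz. apply hst in hz. apply img_inv in hz. destruct hz as [x [hx ->]].
    rewrite hu1. apply hst'. exists V, (f V x). split; [|reflexivity].
    apply (am_start C _ _ f); exact hx.
  - intros V z hz. apply hac in hz. apply img_inv in hz. destruct hz as [y [hy ->]].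
    rewrite hu2. apply hac'. exists V, (g V y). split; [|reflexivity].
    apply (am_acc C _ _ g); exact hy.
Qed.

Ltac sigsub h := let e := fresh "e" in
  pose proof (f_equal (@projT1 _ _) h) as e; simpl in e; subst; apply inj_pair2 in h; subst.

Lemma concat_assoc1 {C : dcat} (G H K W Z P Z' : automaton C) :
  is_concat G H W -> is_concat W K Z -> is_concat H K P -> is_concat G P Z' -> sqsub Z Z'.
Proof.
  intros HW HZ HP HZ'.
  destruct HW as [sG [sH [U1 [a1 [b1 [ha1 [hb1 [PW [QW [glW [unW [stW acW]]]]]]]]]]]].
  destruct HZ as [sW [sK [U2 [a2 [b2 [ha2 [hb2 [PZ [QZ [glZ [unZ [stZ acZ]]]]]]]]]]]].
  destruct HP as [_ [_ [U3 [a3 [b3 [ha3 [hb3 [PP [QP [glP [unP [stP acP]]]]]]]]]]]].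
  destruct HZ' as [_ [sP [U4 [a4 [b4 [ha4 [hb4 [PZ' [QZ' [glZ' [unZ' [stZ' acZ']]]]]]]]]]]].
  pose proof (simple_acc_eq _ _ _ sG ha4 ha1) as e1. sigsub e1.
  pose proof (simple_start_eq _ _ _ sK hb3 hb2) as e2. sigsub e2.
  pose proof hb4 as h4. apply stP in h4. apply img_inv in h4. destruct h4 as [x [hx ->]].
  pose proof (simple_start_eq _ _ _ sH hx hb1) as e3. apply inj_pair2 in e3. subst x.
  pose proof ha2 as h2. apply acW in h2. apply img_inv in h2. destruct h2 as [y [hy ->]].
  pose proof (simple_acc_eq _ _ _ sH hy ha3) as e4. apply inj_pair2 in e4. subst y.
  destruct (unW Z' PZ' (nt_comp QZ' PP)) as [[pW [hpW1 hpW2]] _].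
  { intros V g. rewrite glZ'. simpl. rewrite (nt_nat C _ _ PP). reflexivity. }
  destruct (unZ Z' pW (nt_comp QZ' QP)) as [[u [hu1 hu2]] _].
  { intros V g. rewrite <- (nt_nat C _ _ QW). rewrite hpW2. simpl. rewrite glP. reflexivity. }
  constructor. refine (AutMor C Z Z' u _ _).
  - intros V z hz. apply stZ in hz. apply img_inv in hz. destruct hz as [w [hw ->]].
    apply stW in hw. apply img_inv in hw. destruct hw as [x0 [hx0 ->]].
    rewrite hu1, hpW1. apply stZ'. exists V, x0. auto.
  - intros V z hz. apply acZ in hz. apply img_inv in hz. destruct hz as [k [hk ->]].
    rewrite hu2. simpl. apply acZ'. exists V, (QP V k). split; [|reflexivity].
    apply acP. exists V, k. auto.
Qed.

Lemma concat_assoc2 {C : dcat} (G H K W Z P Z' : automaton C) :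
  is_concat G H W -> is_concat W K Z -> is_concat H K P -> is_concat G P Z' -> sqsub Z' Z.
Proof.
  intros HW HZ HP HZ'.
  destruct HW as [sG [sH [U1 [a1 [b1 [ha1 [hb1 [PW [QW [glW [unW [stW acW]]]]]]]]]]]].
  destruct HZ as [sW [sK [U2 [a2 [b2 [ha2 [hb2 [PZ [QZ [glZ [unZ [stZ acZ]]]]]]]]]]]].
  destruct HP as [_ [_ [U3 [a3 [b3 [ha3 [hb3 [PP [QP [glP [unP [stP acP]]]]]]]]]]]].
  destruct HZ' as [_ [sP [U4 [a4 [b4 [ha4 [hb4 [PZ' [QZ' [glZ' [unZ' [stZ' acZ']]]]]]]]]]]].
  pose proof (simple_acc_eq _ _ _ sG ha4 ha1) as e1. sigsub e1.
  pose proof (simple_start_eq _ _ _ sK hb3 hb2) as e2. sigsub e2.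
  pose proof hb4 as h4. apply stP in h4. apply img_inv in h4. destruct h4 as [x [hx ->]].
  pose proof (simple_start_eq _ _ _ sH hx hb1) as e3. apply inj_pair2 in e3. subst x.
  pose proof ha2 as h2. apply acW in h2. apply img_inv in h2. destruct h2 as [y [hy ->]].
  pose proof (simple_acc_eq _ _ _ sH hy ha3) as e4. apply inj_pair2 in e4. subst y.
  destruct (unP Z (nt_comp PZ QW) QZ) as [[v [hv1 hv2]] _].
  { intros V g. simpl. rewrite (nt_nat C _ _ QW). apply glZ. }
  destruct (unZ' Z (nt_comp PZ PW) v) as [[u [hu1 hu2]] _].
  { intros V g. simpl. rewrite <- (nt_nat C _ _ PP). rewrite hv1. simpl. rewrite glW. reflexivity. }
  constructor. refine (AutMor C Z' Z u _ _).
  - intros V z hz. apply stZ' in hz. apply img_inv in hz. destruct hz as [x0 [hx0 ->]].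
    rewrite hu1. simpl. apply stZ. exists V, (PW V x0). split; [|reflexivity].
    apply stW. exists V, x0. auto.
  - intros V z hz. apply acZ' in hz. apply img_inv in hz. destruct hz as [p [hp ->]].
    apply acP in hp. apply img_inv in hp. destruct hp as [k [hk ->]].
    rewrite hu2, hv2. apply acZ. exists V, k. auto.
Qed.

Lemma reach_bounds w i j : reach w i j -> i <= length w /\ j <= length w.
Proof. intros [h1 [h2 _]]; auto. Qed.

Lemma reach_trans w i j k : reach w i j -> reach w j k -> reach w i k.
Proof.
  intros [a1 [a2 [a3 a4]]] [b1 [b2 [b3 b4]]]. split; [exact a1|]. split; [exact b2|]. split.
  - intros hik t ht. destruct (le_lt_dec i j) as [hij|hij].
    + destruct (le_lt_dec k j) as [hkj|hkj].
      * apply a3; lia.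
      * destruct (le_lt_dec j t) as [hjt|hjt]; [apply b3; lia|apply a3; lia].
    + apply b3; lia.
  - intros hki t ht. destruct (le_lt_dec j i) as [hji|hji].
    + destruct (le_lt_dec j k) as [hjk|hjk].
      * apply a4; lia.
      * destruct (le_lt_dec j t) as [hjt|hjt]; [apply a4; lia|apply b4; lia].
    + apply b4; lia.
Qed.

Lemma ph_ph {C : dcat} (p : path C) i j k (r1 : reach (pw p) i j) (r2 : reach (pw p) j k) :
  comp (ph p r2) (ph p r1) = ph p (reach_trans _ _ _ _ r1 r2).
Proof. symmetry; apply ph_comp. Qed.

Lemma ph_ph' {C : dcat} (p : path C) i j k (r1 : reach (pw p) i j) (r2 : reach (pw p) j k)
  {E : Ob C} (x : Hom E (po p i)) :
  comp (ph p r2) (comp (ph p r1) x) = comp (ph p (reach_trans _ _ _ _ r1 r2)) x.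
Proof. rewrite comp_assoc, ph_ph. reflexivity. Qed.

Lemma ph_id' {C : dcat} (p : path C) i (r : reach (pw p) i i) : ph p r = idm (po p i).
Proof. apply ph_id. Qed.

Ltac pnorm := repeat (rewrite ?comp_assoc', ?ch_ch', ?ch_ch, ?ch_refl, ?comp_id_l', ?comp_id_r',
                      ?ph_ph', ?ph_ph, ?ph_id').

Ltac peq := repeat (first [reflexivity | apply proof_irrelevance | f_equal]).

Lemma nth_l (w1 w2 : list letter) k : k < length w1 -> nth k (w1 ++ w2) LI = nth k w1 LI.
Proof. apply app_nth1. Qed.
Lemma nth_r (w1 w2 : list letter) k : length w1 <= k -> nth k (w1 ++ w2) LI = nth (k - length w1) w2 LI.
Proof. apply app_nth2. Qed.


Lemma rLL w1 w2 i j : reach (w1 ++ w2) i j -> i <= length w1 -> j <= length w1 -> reach w1 i j.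
Proof.
  intros [a1 [a2 [a3 a4]]] hi hj. split; [lia|]. split; [lia|]. split.
  - intros h t ht. rewrite <- nth_l with (w2 := w2) by lia. apply a3; lia.
  - intros h t ht. rewrite <- nth_l with (w2 := w2) by lia. apply a4; lia.
Qed.

Lemma rRR w1 w2 i j : reach (w1 ++ w2) i j -> length w1 <= i -> length w1 <= j ->
  reach w2 (i - length w1) (j - length w1).
Proof.
  intros [a1 [a2 [a3 a4]]] hi hj. rewrite length_app in a1, a2. split; [lia|]. split; [lia|]. split.
  - intros h t ht. replace t with (t + length w1 - length w1) by lia.
    rewrite <- nth_r by lia. apply a3; lia.
  - intros h t ht. replace t with (t + length w1 - length w1) by lia.
    rewrite <- nth_r by lia. apply a4; lia.
Qed.

Lemma rLR1 w1 w2 i j : reach (w1 ++ w2) i j -> i <= length w1 -> ~ j <= length w1 ->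
  reach w1 i (length w1).
Proof.
  intros [a1 [a2 [a3 a4]]] hi hj. split; [lia|]. split; [lia|]. split.
  - intros h t ht. rewrite <- nth_l with (w2 := w2) by lia. apply a3; lia.
  - intros h t ht. lia.
Qed.

Lemma rLR2 w1 w2 i j : reach (w1 ++ w2) i j -> i <= length w1 -> ~ j <= length w1 ->
  reach w2 0 (j - length w1).
Proof.
  intros [a1 [a2 [a3 a4]]] hi hj. rewrite length_app in a1, a2. split; [lia|]. split; [lia|]. split.
  - intros h t ht. replace t with (t + length w1 - length w1) by lia.
    rewrite <- nth_r by lia. apply a3; lia.
  - intros h t ht. lia.
Qed.

Lemma rRL1 w1 w2 i j : reach (w1 ++ w2) i j -> ~ i <= length w1 -> j <= length w1 ->
  reach w2 (i - length w1) 0.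
Proof.
  intros [a1 [a2 [a3 a4]]] hi hj. rewrite length_app in a1, a2. split; [lia|]. split; [lia|]. split.
  - intros h t ht. lia.
  - intros h t ht. replace t with (t + length w1 - length w1) by lia.
    rewrite <- nth_r by lia. apply a4; lia.
Qed.

Lemma rRL2 w1 w2 i j : reach (w1 ++ w2) i j -> ~ i <= length w1 -> j <= length w1 ->
  reach w1 (length w1) j.
Proof.
  intros [a1 [a2 [a3 a4]]] hi hj. split; [lia|]. split; [lia|]. split.
  - intros h t ht. lia.
  - intros h t ht. rewrite <- nth_l with (w2 := w2) by lia. apply a4; lia.
Qed.

Lemma rliftL w1 w2 i j : reach w1 i j -> reach (w1 ++ w2) i j.
Proof.
  intros [a1 [a2 [a3 a4]]].
  split; [rewrite length_app; lia|]. split; [rewrite length_app; lia|]. split.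
  - intros h t ht. rewrite nth_l by lia. apply a3; lia.
  - intros h t ht. rewrite nth_l by lia. apply a4; lia.
Qed.

Lemma rliftR w1 w2 i j : reach w2 i j -> reach (w1 ++ w2) (i + length w1) (j + length w1).
Proof.
  intros [a1 [a2 [a3 a4]]].
  split; [rewrite length_app; lia|]. split; [rewrite length_app; lia|]. split.
  - intros h t ht. rewrite nth_r by lia. apply a3; lia.
  - intros h t ht. rewrite nth_r by lia. apply a4; lia.
Qed.

Definition cpo {C : dcat} (p q : path C) (i : nat) : Ob C :=
  if le_dec i (plen p) then po p i else po q (i - plen p).

Lemma eqL {C : dcat} (p q : path C) i : i <= plen p -> cpo p q i = po p i.
Proof. intro h. unfold cpo. destruct (le_dec i (plen p)); [reflexivity|lia]. Qed.

Lemma eqR {C : dcat} (p q : path C) i : ~ i <= plen p -> cpo p q i = po q (i - plen p).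
Proof. intro h. unfold cpo. destruct (le_dec i (plen p)); [lia|reflexivity]. Qed.

Definition cw {C : dcat} (p q : path C) := pw p ++ pw q.

Definition cph {C : dcat} (p q : path C) (e : po p (plen p) = po q 0) i j
  (r : reach (cw p q) i j) : Hom (cpo p q i) (cpo p q j) :=
  match le_dec i (plen p) with
  | left hi =>
    match le_dec j (plen p) with
    | left hj => comp (ch (eq_sym (eqL p q j hj)))
                   (comp (ph p (rLL _ _ _ _ r hi hj)) (ch (eqL p q i hi)))
    | right hj => comp (ch (eq_sym (eqR p q j hj)))
                   (comp (ph q (rLR2 _ _ _ _ r hi hj))
                     (comp (ch e) (comp (ph p (rLR1 _ _ _ _ r hi hj)) (ch (eqL p q i hi)))))
    end
  | right hi =>
    match le_dec j (plen p) with
    | left hj => comp (ch (eq_sym (eqL p q j hj)))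
                   (comp (ph p (rRL2 _ _ _ _ r hi hj))
                     (comp (ch (eq_sym e)) (comp (ph q (rRL1 _ _ _ _ r hi hj)) (ch (eqR p q i hi)))))
    | right hj => comp (ch (eq_sym (eqR p q j hj)))
                   (comp (ph q (rRR _ _ _ _ r ltac:(unfold plen in *; lia) ltac:(unfold plen in *; lia))) (ch (eqR p q i hi)))
    end
  end.

Lemma cph_id {C : dcat} (p q : path C) e i (r : reach (cw p q) i i) : cph p q e i i r = idm _.
Proof. unfold cph. destruct (le_dec i (plen p)); pnorm; reflexivity. Qed.

Lemma cph_comp {C : dcat} (p q : path C) e i j k (r1 : reach (cw p q) i j)
  (r2 : reach (cw p q) j k) (r3 : reach (cw p q) i k) :
  cph p q e i k r3 = comp (cph p q e j k r2) (cph p q e i j r1).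
Proof.
  unfold cph.
  destruct (le_dec i (plen p)); destruct (le_dec j (plen p)); destruct (le_dec k (plen p));
    pnorm; peq.
Qed.

Lemma isF_ch {C : dcat} {A B : Ob C} (e : A = B) : isF (ch e).
Proof. destruct e. apply isF_id. Qed.
Lemma isB_ch {C : dcat} {A B : Ob C} (e : A = B) : isB (ch e).
Proof. destruct e. apply isB_id. Qed.

Lemma cph_F {C : dcat} (p q : path C) e i j (r : reach (cw p q) i j) : i <= j -> isF (cph p q e i j r).
Proof.
  intro hij. unfold cph. unfold plen in *.
  destruct (le_dec i (length (pw p))); destruct (le_dec j (length (pw p)));
    try lia; repeat (apply isF_comp); try apply isF_ch; apply ph_F; lia.
Qed.

Lemma cph_B {C : dcat} (p q : path C) e i j (r : reach (cw p q) i j) : j <= i -> isB (cph p q e i j r).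
Proof.
  intro hij. unfold cph. unfold plen in *.
  destruct (le_dec i (length (pw p))); destruct (le_dec j (length (pw p)));
    try lia; repeat (apply isB_comp); try apply isB_ch; apply ph_B; lia.
Qed.

Definition cpath {C : dcat} (p q : path C) (e : po p (plen p) = po q 0) : path C :=
  Path C (cw p q) (cpo p q) (cph p q e) (cph_id p q e) (cph_comp p q e) (cph_F p q e) (cph_B p q e).

Definition pcoprod {C : cat} (X Y : presheaf C) : presheaf C.
Proof.
  refine (Presheaf C (fun V => (X V + Y V)%type) (fun U V f s => sact X Y f s) _ _).
  - intros U [x|y]; simpl; rewrite pact_id; reflexivity.
  - intros U V W f g [x|y]; simpl; rewrite pact_comp; reflexivity.
Defined.

Definition cinl {C : cat} (X Y : presheaf C) : nattrans X (pcoprod X Y) :=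
  NatTrans C X (pcoprod X Y) (fun V x => inl x) (fun U V f x => eq_refl).
Definition cinr {C : cat} (X Y : presheaf C) : nattrans Y (pcoprod X Y) :=
  NatTrans C Y (pcoprod X Y) (fun V y => inr y) (fun U V f x => eq_refl).

Definition pbool (C : cat) : presheaf C :=
  Presheaf C (fun _ => bool) (fun _ _ _ b => b) (fun _ _ => eq_refl) (fun _ _ _ _ _ _ => eq_refl).

Definition isl {C : cat} (X Y : presheaf C) : nattrans (pcoprod X Y) (pbool C).
Proof.
  refine (NatTrans C (pcoprod X Y) (pbool C)
            (fun V s => match s with inl _ => true | inr _ => false end) _).
  intros U V f [x|y]; reflexivity.
Defined.

Definition ctrue {C : cat} (X : presheaf C) : nattrans X (pbool C) :=
  NatTrans C X (pbool C) (fun _ _ => true) (fun _ _ _ _ => eq_refl).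

Definition getl {A B : Type} (s : (A + B)%type) (h : exists a, s = inl a) : A.
Proof. destruct s as [a|b]. exact a. exfalso. destruct h as [a e]. discriminate. Defined.

Lemma getl_spec {A B : Type} (s : (A + B)%type) h : s = inl (getl s h).
Proof. destruct s; simpl. reflexivity. exfalso. destruct h; discriminate. Qed.

Lemma colim_uniq {C : dcat} (p : path C) (X : presheaf C) iota :
  is_track_colimit p X iota ->
  forall W (u1 u2 : nattrans X W),
  (forall i, i <= plen p -> forall U g, u1 U (iota i U g) = u2 U (iota i U g)) ->
  forall U x, u1 U x = u2 U x.
Proof.
  intros [hc hu] W u1 u2 h.
  destruct (hu W (fun i => nt_comp u1 (iota i))) as [_ hu2].
  { intros i j r U g. simpl. rewrite hc. reflexivity. }
  apply hu2.
  - intros; reflexivity.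
  - intros i hi U g. simpl. symmetry. apply h. exact hi.
Qed.

Lemma colim_partial {C : dcat} (p : path C) (X : presheaf C) iota :
  is_track_colimit p X iota ->
  forall (W : presheaf C) (tau : forall i, i <= plen p -> nattrans (repr C (po p i)) W),
  (forall i j (r : reach (pw p) i j) hi hj U g, tau j hj U (comp (ph p r) g) = tau i hi U g) ->
  exists u : nattrans X W, forall i (hi : i <= plen p) U g, u U (iota i U g) = tau i hi U g.
Proof.
  intros H W tau htau. pose proof H as [hc hu].
  set (tau' := fun i => match le_dec i (plen p) with
                        | left h => nt_comp (cinl W X) (tau i h)
                        | right _ => nt_comp (cinr W X) (iota i) end).
  destruct (hu (pcoprod W X) tau') as [[u' hu'] _].
  { intros i j r U g. pose proof r as [hi [hj _]]. unfold tau'.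
    destruct (le_dec i (plen p)); destruct (le_dec j (plen p)); try (unfold plen in *; lia).
    simpl. rewrite htau with (hi := l). reflexivity. }
  assert (hl : forall U x, exists w, u' U x = inl w).
  { intros U x.
    assert (hb : nt_comp (isl W X) u' U x = ctrue X U x).
    { apply (colim_uniq p X iota H). intros i hi V g. simpl. rewrite hu' by exact hi.
      unfold tau'. destruct (le_dec i (plen p)); [reflexivity|lia]. }
    simpl in hb. destruct (u' U x) as [w|y]; [eauto|discriminate]. }
  unshelve eexists (NatTrans C X W (fun U x => getl (u' U x) (hl U x)) _).
  - intros U V f x. simpl.
    assert (E : inl (getl (u' U (pact X f x)) (hl U (pact X f x))) =
                inl (B := X U) (pact W f (getl (u' V x) (hl V x)))).
    { rewrite <- getl_spec. rewrite (nt_nat C _ _ u'). rewrite (getl_spec (u' V x) (hl V x)) at 1.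
      reflexivity. }
    injection E; auto.
  - intros i hi U g. simpl.
    assert (E : inl (getl (u' U (iota i U g)) (hl U (iota i U g))) = inl (B := X U) (tau i hi U g)).
    { rewrite <- getl_spec. rewrite hu' by exact hi. unfold tau'.
      destruct (le_dec i (plen p)); [|lia]. simpl. rewrite (proof_irrelevance _ l hi). reflexivity. }
    injection E; auto.
Qed.

Definition cio {C : dcat} (p q : path C) {X Y Z : presheaf C} (P : nattrans X Z) (Q : nattrans Y Z)
  (iota : forall i, nattrans (repr C (po p i)) X) (kappa : forall i, nattrans (repr C (po q i)) Y) i
  : nattrans (repr C (cpo p q i)) Z :=
  match le_dec i (plen p) with
  | left hi => nt_comp P (ypre (ch (eqL p q i hi)) (iota i))
  | right hi => nt_comp Q (ypre (ch (eqR p q i hi)) (kappa (i - plen p)))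
  end.

Lemma cio_compat {C : dcat} (p q : path C) (e : po p (plen p) = po q 0) {X Y Z : presheaf C}
  (P : nattrans X Z) (Q : nattrans Y Z)
  (iota : forall i, nattrans (repr C (po p i)) X) (kappa : forall i, nattrans (repr C (po q i)) Y)
  (hcX : forall i j (r : reach (pw p) i j) U g, iota j U (comp (ph p r) g) = iota i U g)
  (hcY : forall i j (r : reach (pw q) i j) U g, kappa j U (comp (ph q r) g) = kappa i U g)
  (glueL : forall V (h : Hom V (po p (plen p))), Q V (kappa 0 V (comp (ch e) h)) = P V (iota (plen p) V h)) :
  forall i j (r : reach (cw p q) i j) U g,
    cio p q P Q iota kappa j U (comp (cph p q e i j r) g) = cio p q P Q iota kappa i U g.
Proof.
  intros i j r U g. unfold cio, cph.
  destruct (le_dec i (plen p)); destruct (le_dec j (plen p)); simpl; pnorm.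
  - rewrite hcX. peq.
  - rewrite hcY, glueL, hcX. peq.
  - rewrite hcX, <- glueL. pnorm. rewrite hcY. peq.
  - rewrite hcY. peq.
Qed.

Lemma eQ {C : dcat} (p q : path C) (e : po p (plen p) = po q 0) i :
  po q i = cpo p q (i + plen p).
Proof.
  unfold cpo. destruct (le_dec (i + plen p) (plen p)).
  - assert (i = 0) by lia. subst i. simpl. symmetry; exact e.
  - f_equal. lia.
Qed.

Lemma ph_idx {C : dcat} (p : path C) i j i' j' (r : reach (pw p) i j) (r' : reach (pw p) i' j')
  (ei : i = i') (ej : j = j') :
  ph p r = comp (ch (f_equal (po p) (eq_sym ej))) (comp (ph p r') (ch (f_equal (po p) ei))).
Proof. subst. simpl. rewrite comp_id_l, comp_id_r. f_equal. apply proof_irrelevance. Qed.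

Lemma sig_yon {C : cat} (Z : presheaf C) {A B : Ob C} (F : nattrans (repr C A) Z) (e : B = A) :
  existT (fun V => Z V) B (F B (comp (ch e) (idm B))) = existT (fun V => Z V) A (F A (idm A)).
Proof. destruct e; simpl; rewrite comp_id_l; reflexivity. Qed.

Lemma len_cw {C : dcat} (p q : path C) : length (cw p q) = plen p + plen q.
Proof. unfold cw, plen. apply length_app. Qed.

Lemma concat_track_aux {C : dcat} (X Y Z : automaton C) :
  is_track X -> is_track Y -> is_concat X Y Z -> is_track Z.
Proof.
  intros [p [iota [colX [stX acX]]]] [q [kappa [colY [stY acY]]]]
         [sX [sY [U [a [b [ha [hb [P [Q [glue [univ [stZ acZ]]]]]]]]]]]].
  apply acX in ha. pose proof (f_equal (@projT1 _ _) ha) as eU. simpl in eU. subst U.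
  apply inj_pair2 in ha. subst a.
  apply stY in hb. apply sig_inv in hb. destruct hb as [e hb]. subst b.
  pose proof colX as [hcX _]. pose proof colY as [hcY _].
  assert (glueL : forall V (h : Hom V (po p (plen p))),
             Q V (kappa 0 V (comp (ch e) h)) = P V (iota (plen p) V h)).
  { intros V h. pose proof (glue V h) as g0.
    rewrite yon_nat, comp_id_l in g0. rewrite <- pact_comp, yon_nat, comp_id_l in g0.
    symmetry; exact g0. }
  assert (Pcio : forall i (hi : i <= plen p) V h,
    P V (iota i V h) = cio p q P Q iota kappa i V (comp (ch (eq_sym (eqL p q i hi))) h)).
  { intros i hi V h. unfold cio. destruct (le_dec i (plen p)); [|lia]. simpl. pnorm. reflexivity. }
  assert (Qcio : forall i V h, 0 < i ->
    Q V (kappa i V h) = cio p q P Q iota kappa (i + plen p) V (comp (ch (eQ p q e i)) h)).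
  { intros i V h hi. unfold cio. destruct (le_dec (i + plen p) (plen p)); [lia|]. simpl.
    rewrite (fam_shift (po q) Y kappa i (i + plen p - plen p) ltac:(lia)). pnorm. reflexivity. }
  exists (cpath p q e), (cio p q P Q iota kappa).
  split; [split|split].
  - intros i j r V g. simpl. apply cio_compat; assumption.
  - intros W tau htau. simpl in htau.
    set (taup := fun i (hi : i <= plen p) => ypre (ch (eq_sym (eqL p q i hi))) (tau i)).
    set (tauq := fun i (hi : i <= plen q) => ypre (ch (eQ p q e i)) (tau (i + plen p))).
    destruct (colim_partial p X iota colX W taup) as [uX huX].
    { intros i j r hi hj V g. unfold taup; simpl.
      rewrite <- (htau i j (rliftL _ _ _ _ r) V (comp (ch (eq_sym (eqL p q i hi))) g)).
      f_equal. unfold cph. destruct (le_dec i (plen p)); destruct (le_dec j (plen p)); try lia.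
      pnorm. peq. }
    destruct (colim_partial q Y kappa colY W tauq) as [uY huY].
    { intros i j r hi hj V g. unfold tauq; simpl.
      rewrite <- (htau (i + plen p) (j + plen p) (rliftR _ _ _ _ r) V (comp (ch (eQ p q e i)) g)).
      f_equal. unfold cph.
      destruct (le_dec (i + plen p) (plen p)); destruct (le_dec (j + plen p) (plen p));
        try (assert (i = 0) by lia; subst i); try (assert (j = 0) by lia; subst j);
        try (match goal with |- context [@ph _ q ?i' ?j' ?r'] =>
               tryif constr_eq r' r then fail else
               rewrite (ph_idx q _ _ i' j' r r' ltac:(unfold plen in *; lia) ltac:(unfold plen in *; lia)) end);
        pnorm; peq. }
    assert (glue' : forall V (g : Hom V (po p (plen p))),
       uX V (pact X g (iota (plen p) (po p (plen p)) (idm _))) =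
       uY V (pact Y g (pact Y (ch e) (kappa 0 (po q 0) (idm _))))).
    { intros V g. rewrite yon_nat, <- pact_comp, yon_nat.
      rewrite (huX (plen p) (le_n _)), (huY 0 (Nat.le_0_l _)).
      unfold taup, tauq; simpl. pnorm. peq. }
    destruct (univ W uX uY glue') as [[u [hu1 hu2]] _].
    split.
    + exists u. intros i hi V g. unfold cio. destruct (le_dec i (plen p)).
      * simpl. rewrite hu1, (huX i l). unfold taup; simpl. pnorm. reflexivity.
      * simpl. rewrite hu2.
        assert (hi' : i - plen p <= plen q).
        { pose proof (len_cw p q). change (plen (cpath p q e)) with (length (cw p q)) in hi. lia. }
        rewrite (huY _ hi'). unfold tauq; simpl.
        rewrite (fam_shift (cpo p q) W tau i (i - plen p + plen p) ltac:(lia)). pnorm. reflexivity.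
    + intros u1 u2 h1 h2 V z.
      assert (gl1 : forall V (g : Hom V (po p (plen p))),
         nt_comp u1 P V (pact X g (iota (plen p) (po p (plen p)) (idm _))) =
         nt_comp u1 Q V (pact Y g (pact Y (ch e) (kappa 0 (po q 0) (idm _))))).
      { intros V0 g. simpl. rewrite glue. reflexivity. }
      assert (hP : forall V x, u2 V (P V x) = u1 V (P V x)).
      { apply (colim_uniq p X iota colX W (nt_comp u2 P) (nt_comp u1 P)).
        intros i hi V0 h. simpl. rewrite (Pcio i hi).
        assert (hi2 : i <= plen (cpath p q e)).
        { pose proof (len_cw p q). change (plen (cpath p q e)) with (length (cw p q)). lia. }
        rewrite (h1 i hi2), (h2 i hi2). reflexivity. }
      assert (hQ : forall V y, u2 V (Q V y) = u1 V (Q V y)).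
      { apply (colim_uniq q Y kappa colY W (nt_comp u2 Q) (nt_comp u1 Q)).
        intros i hi V0 h. simpl. destruct i as [|i].
        - replace h with (comp (ch e) (comp (ch (eq_sym e)) h)) by (pnorm; reflexivity).
          rewrite glueL. apply hP.
        - rewrite (Qcio (S i) V0 h ltac:(lia)).
          assert (hi2 : S i + plen p <= plen (cpath p q e)).
          { pose proof (len_cw p q). change (plen (cpath p q e)) with (length (cw p q)). lia. }
          rewrite (h1 _ hi2), (h2 _ hi2). reflexivity. }
      apply (proj2 (univ W (nt_comp u1 P) (nt_comp u1 Q) gl1)); intros; simpl; auto.
  - assert (KS : existT (fun V => Z V) (cpo p q 0) (cio p q P Q iota kappa 0 (cpo p q 0) (idm _)) =
                 existT (fun V => Z V) (po p 0) (P _ (iota 0 _ (idm _)))).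
    { unfold cio. destruct (le_dec 0 (plen p)); [|lia].
      apply (sig_yon Z (nt_comp P (iota 0)) (eqL p q 0 l)). }
    intro e'. rewrite stZ. split.
    + intros [V [x [hx ->]]]. apply stX in hx. sigsub hx. symmetry; exact KS.
    + intros ->. exists (po p 0), (iota 0 _ (idm _)). split; [apply stX; reflexivity|exact KS].
  - assert (KA : existT (fun V => Z V) (cpo p q (plen (cpath p q e)))
                   (cio p q P Q iota kappa (plen (cpath p q e)) _ (idm _)) =
                 existT (fun V => Z V) (po q (plen q)) (Q _ (kappa (plen q) _ (idm _)))).
    { pose proof (len_cw p q) as hl. change (plen (cpath p q e)) with (length (cw p q)).
      destruct (Nat.eq_dec (plen q) 0) as [m0|m0].
      - rewrite (fam_sig (cpo p q) Z (cio p q P Q iota kappa) (plen p) (length (cw p q)) ltac:(lia)).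
        transitivity (existT (fun V => Z V) (po p (plen p)) (P _ (iota (plen p) _ (idm _)))).
        { unfold cio. destruct (le_dec (plen p) (plen p)); [|lia].
          apply (sig_yon Z (nt_comp P (iota (plen p))) (eqL p q _ l)). }
        transitivity (existT (fun V => Z V) (po q 0) (Q _ (kappa 0 _ (idm _)))).
        { rewrite <- glueL. apply (sig_yon Z (nt_comp Q (kappa 0)) e). }
        symmetry; apply (fam_sig (po q) Z (fun i => nt_comp Q (kappa i)) 0 (plen q) m0).
      - rewrite (fam_sig (cpo p q) Z (cio p q P Q iota kappa) (plen q + plen p) (length (cw p q)) ltac:(lia)).
        transitivity (existT (fun V => Z V) (po q (plen q + plen p - plen p))
                        (Q _ (kappa (plen q + plen p - plen p) _ (idm _)))).
        { unfold cio. destruct (le_dec (plen q + plen p) (plen p)); [lia|].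
          apply (sig_yon Z (nt_comp Q (kappa _)) (eqR p q _ n)). }
        apply (fam_sig (po q) Z (fun i => nt_comp Q (kappa i)) (plen q) (plen q + plen p - plen p) ltac:(lia)). }
    intro e'. rewrite acZ. split.
    + intros [V [y [hy ->]]]. apply acY in hy. sigsub hy. symmetry; exact KA.
    + intros ->. exists (po q (plen q)), (kappa (plen q) _ (idm _)).
      split; [apply acY; reflexivity|exact KA].
Qed.

Lemma concat_track {C : dcat} (X Y Z : automaton C) :
  is_track X -> is_track Y -> is_concat X Y Z -> is_track Z.
Proof. apply concat_track_aux. Qed.

Definition ipath {C : dcat} (U : Ob C) : path C.
Proof.
  refine (Path C nil (fun _ => U) (fun i j r => idm U) _ _ _ _).
  - intros; reflexivity.
  - intros; simpl; rewrite comp_id_l; reflexivity.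
  - intros; apply isF_id.
  - intros; apply isB_id.
Defined.

Lemma iota_track {C : dcat} (U : Ob C) : is_track (@iota_aut C U).
Proof.
  exists (ipath U), (fun i => nt_id (repr C U)).
  split; [split|split].
  - intros i j r V g. simpl. apply comp_id_l.
  - intros W tau htau. split.
    + exists (tau 0). intros i hi V g. unfold plen in hi; simpl in hi.
      assert (i = 0) by lia. subst i. reflexivity.
    + intros u1 u2 h1 h2 V x. specialize (h1 0 (le_n _) V x). specialize (h2 0 (le_n _) V x).
      exact (eq_trans h1 (eq_sym h2)).
  - intro e; simpl; tauto.
  - intro e; simpl; tauto.
Qed.

Lemma concat_start {C : dcat} (X Y Z : automaton C) V x :
  is_concat X Y Z -> astart X (existT _ V x) -> exists z, astart Z (existT _ V z).
Proof.
  intros [_ [_ [U [a [b [_ [_ [P [Q [_ [_ [hst _]]]]]]]]]]]] h.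
  exists (P V x). apply hst. exists V, x. auto.
Qed.

Lemma concat_acc {C : dcat} (X Y Z : automaton C) V y :
  is_concat X Y Z -> aacc Y (existT _ V y) -> exists z, aacc Z (existT _ V z).
Proof.
  intros [_ [_ [U [a [b [_ [_ [P [Q [_ [_ [_ hac]]]]]]]]]]]] h.
  exists (Q V y). apply hac. exists V, y. auto.
Qed.

Lemma concat_start_inv {C : dcat} (X Y Z : automaton C) V z :
  is_concat X Y Z -> astart Z (existT _ V z) -> exists x, astart X (existT _ V x).
Proof.
  intros [_ [_ [U [a [b [_ [_ [P [Q [_ [_ [hst _]]]]]]]]]]]] h.
  apply hst in h. apply img_inv in h. destruct h as [x [h _]]. eauto.
Qed.

Lemma concat_acc_inv {C : dcat} (X Y Z : automaton C) V z :
  is_concat X Y Z -> aacc Z (existT _ V z) -> exists y, aacc Y (existT _ V y).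
Proof.
  intros [_ [_ [U [a [b [_ [_ [P [Q [_ [_ [_ hac]]]]]]]]]]]] h.
  apply hac in h. apply img_inv in h. destruct h as [y [h _]]. eauto.
Qed.

Lemma concat_glue {C : dcat} (X Y Z : automaton C) :
  is_concat X Y Z -> exists U a b, aacc X (existT _ U a) /\ astart Y (existT _ U b).
Proof.
  intros [_ [_ [U [a [b [ha [hb _]]]]]]]. eauto.
Qed.

Lemma mul_one_r {C : dcat} (L : lang C) : is_language L -> lsub (lmul L (lone C)) L.
Proof.
  intros [hL1 hL2] X [hX [Z [[G [D [hG [[hD [Z0 [[U0 ->] hD0]]] hc]]]] hXZ]]].
  apply (hL2 X G hX); [|exact hG].
  eapply sqsub_trans; [exact hXZ|]. eapply concat_unit; eauto.
Qed.

Lemma mul_one_r' {C : dcat} (L : lang C) : is_language L -> lsub L (lmul L (lone C)).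
Proof.
  intros [hL1 hL2] X hXL. pose proof (hL1 X hXL) as hX.
  pose proof (track_simple X hX) as sX.
  destruct sX as [sXs [[U a] hXa]].
  assert (ha : aacc X (existT _ U a)) by (apply hXa; reflexivity).
  assert (sI : simple (@iota_aut C U)).
  { split; eexists; intro; simpl; reflexivity. }
  destruct (pushout_ex X (iota_aut U) U a (idm U) (track_simple X hX) sI ha eq_refl) as [Z HZ].
  split; [exact hX|]. exists Z. split.
  - exists X, (iota_aut U). split; [exact hXL|]. split; [|exact HZ].
    split; [apply iota_track|]. exists (iota_aut U). split; [eauto|apply sqsub_refl].
  - destruct HZ as [_ [_ [U' [a' [b' [ha' [hb' [P [Q [glue [_ [hst hac]]]]]]]]]]]].
    pose proof (simple_acc_eq _ _ _ (conj sXs (ex_intro _ _ hXa)) ha' ha) as e.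
    sigsub e. simpl in hb'. apply inj_pair2 in hb'. subst b'.
    constructor. refine (AutMor C X Z P _ _).
    + intros V x hx. apply hst. exists V, x. auto.
    + intros V x hx. apply hXa in hx. sigsub hx.
      apply hac. exists U, (idm U). split; [reflexivity|].
      f_equal. pose proof (glue U (idm U)) as g. rewrite !pact_id in g. exact g.
Qed.

Lemma mul_assoc1 {C : dcat} (L M N : lang C) :
  is_language L -> is_language M -> is_language N ->
  lsub (lmul (lmul L M) N) (lmul L (lmul M N)).
Proof.
  intros hL hM hN X [hX [Z [[T [K [[hT [W0 [[G [H [hG [hH hW0]]]] hTW]]] [hK hZ]]]] hXZ]]].
  pose proof (proj1 hM H hH) as tH.
  pose proof (proj1 hN K hK) as tK.
  pose proof (proj1 hL G hG) as tG.
  pose proof hZ as hZ'. destruct hZ' as [_ [_ [U2 [a2 [b2 [ha2 [hb2 _]]]]]]].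
  destruct hTW as [f].
  pose proof (am_acc C _ _ f U2 a2 ha2) as hfa.
  destruct (pushout_ex W0 K U2 (f U2 a2) b2 (concat_simple _ _ _ hW0) (track_simple _ tK) hfa hb2)
    as [Z1 HZ1].
  assert (hZZ1 : sqsub Z Z1).
  { eapply concat_mono; eauto. constructor; exact f. apply sqsub_refl. }
  destruct (concat_acc_inv _ _ _ _ _ hW0 hfa) as [y hy].
  destruct (pushout_ex H K U2 y b2 (track_simple _ tH) (track_simple _ tK) hy hb2) as [P HP].
  pose proof (concat_track _ _ _ tH tK HP) as tP.
  destruct (concat_glue _ _ _ hW0) as [U1 [a1 [b1 [ha1 hb1]]]].
  destruct (concat_start _ _ _ _ _ HP hb1) as [pb hpb].
  destruct (pushout_ex G P U1 a1 pb (track_simple _ tG) (track_simple _ tP) ha1 hpb) as [Z' HZ'].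
  pose proof (concat_assoc1 _ _ _ _ _ _ _ hW0 HZ1 HP HZ') as h.
  split; [exact hX|]. exists Z'. split.
  - exists G, P. split; [exact hG|]. split; [|exact HZ'].
    split; [exact tP|]. exists P. split; [|apply sqsub_refl]. exists H, K. auto.
  - eapply sqsub_trans; [exact hXZ|]. eapply sqsub_trans; eauto.
Qed.

Lemma mul_assoc2 {C : dcat} (L M N : lang C) :
  is_language L -> is_language M -> is_language N ->
  lsub (lmul L (lmul M N)) (lmul (lmul L M) N).
Proof.
  intros hL hM hN X [hX [Z [[G [D [hG [[hD [P0 [[H [K [hH [hK hP0]]]] hDP]]] hZ]]]] hXZ]]].
  pose proof (proj1 hM H hH) as tH.
  pose proof (proj1 hN K hK) as tK.
  pose proof (proj1 hL G hG) as tG.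
  pose proof hZ as hZ'. destruct hZ' as [_ [_ [U [a [b [ha [hb _]]]]]]].
  destruct hDP as [g].
  pose proof (am_start C _ _ g U b hb) as hgb.
  destruct (pushout_ex G P0 U a (g U b) (track_simple _ tG) (concat_simple _ _ _ hP0) ha hgb)
    as [Z1 HZ1].
  assert (hZZ1 : sqsub Z Z1).
  { eapply concat_mono; eauto. apply sqsub_refl. constructor; exact g. }
  destruct (concat_start_inv _ _ _ _ _ hP0 hgb) as [y hy].
  destruct (pushout_ex G H U a y (track_simple _ tG) (track_simple _ tH) ha hy) as [W HW].
  pose proof (concat_track _ _ _ tG tH HW) as tW.
  destruct (concat_glue _ _ _ hP0) as [U3 [a3 [b3 [ha3 hb3]]]].
  destruct (concat_acc _ _ _ _ _ HW ha3) as [wa hwa].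
  destruct (pushout_ex W K U3 wa b3 (track_simple _ tW) (track_simple _ tK) hwa hb3) as [Z' HZ'].
  pose proof (concat_assoc2 _ _ _ _ _ _ _ HW HZ' hP0 HZ1) as h.
  split; [exact hX|]. exists Z'. split.
  - exists W, K. split; [|split; [exact hK|exact HZ']].
    split; [exact tW|]. exists W. split; [|apply sqsub_refl]. exists G, H. auto.
  - eapply sqsub_trans; [exact hXZ|]. eapply sqsub_trans; eauto.
Qed.

Lemma lpow_mul {C : dcat} (L : lang C) : is_language L ->
  forall n m, 1 <= n -> lsub (lmul (lpow L n) (lpow L m)) (lpow L (n + m)).
Proof.
  intros hL n. induction n as [|n IH]; intros m hn; [lia|].
  destruct n as [|n].
  - simpl. apply lmul_mono; [apply mul_one_r; exact hL|intros X h; exact h].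
  - intros X h. change (lpow L (S (S n))) with (lmul L (lpow L (S n))) in h.
    apply mul_assoc1 in h; try apply lpow_lang; try exact hL.
    simpl. revert X h. apply lmul_mono; [intros X h; exact h|].
    apply IH; lia.
Qed.

Theorem proposition10 (C : dcat) :
  Rat (@lempty C) /\
  (forall L M : lang C, Rat L -> Rat M -> Rat (lplus L M)) /\
  (forall L M : lang C, Rat L -> Rat M -> Rat (lmul L M)) /\
  (forall L : lang C, Rat L -> Rat (lplusstar L)) /\
  (* + associative, commutative, idempotent, unit empty *)
  (forall L M N : lang C, Rat L -> Rat M -> Rat N ->
      leqv (lplus L (lplus M N)) (lplus (lplus L M) N)) /\
  (forall L M : lang C, Rat L -> Rat M -> leqv (lplus L M) (lplus M L)) /\
  (forall L : lang C, Rat L -> leqv (lplus L L) L) /\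
  (forall L : lang C, Rat L -> leqv (lplus (@lempty C) L) L) /\
  (forall L : lang C, Rat L -> leqv (lplus L (@lempty C)) L) /\
  (* * associative, distributes over +, empty absorbing *)
  (forall L M N : lang C, Rat L -> Rat M -> Rat N ->
      leqv (lmul L (lmul M N)) (lmul (lmul L M) N)) /\
  (forall L M N : lang C, Rat L -> Rat M -> Rat N ->
      leqv (lmul L (lplus M N)) (lplus (lmul L M) (lmul L N))) /\
  (forall L M N : lang C, Rat L -> Rat M -> Rat N ->
      leqv (lmul (lplus L M) N) (lplus (lmul L N) (lmul M N))) /\
  (forall L : lang C, Rat L -> leqv (lmul (@lempty C) L) (@lempty C)) /\
  (forall L : lang C, Rat L -> leqv (lmul L (@lempty C)) (@lempty C)) /\
  (* star axioms *)
  (forall L : lang C, Rat L ->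
      lsub (lplus L (lmul (lplusstar L) (lplusstar L))) (lplusstar L)) /\
  (forall L M : lang C, Rat L -> Rat M ->
      lsub (lplus L (lmul M M)) M -> lsub (lplusstar L) M).
Proof.
  unfold leqv, lplus, lempty.
  split; [constructor|].
  split; [intros; apply Rat_plus; auto|].
  split; [intros; apply Rat_mul; auto|].
  split; [intros; apply Rat_plusstar; auto|].
  split; [intros; tauto|].
  split; [intros; tauto|].
  split; [intros; tauto|].
  split; [intros; tauto|].
  split; [intros; tauto|].
  split.
  { intros L M N hL hM hN X. apply Rat_lang in hL, hM, hN.
    split; [apply mul_assoc2|apply mul_assoc1]; auto. }
  split.
  { intros L M N _ _ _ X. unfold lmul, down. split.
    - intros [hX [Z [[G [D [hG [[hD|hD] hc]]]] hXZ]]]; [left|right];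
        (split; [exact hX|]); exists Z; split; eauto; exists G, D; auto.
    - intros [[hX [Z [[G [D [hG [hD hc]]]] hXZ]]]|[hX [Z [[G [D [hG [hD hc]]]] hXZ]]]];
        (split; [exact hX|]); exists Z; split; eauto; exists G, D; auto. }
  split.
  { intros L M N _ _ _ X. unfold lmul, down. split.
    - intros [hX [Z [[G [D [[hG|hG] [hD hc]]]] hXZ]]]; [left|right];
        (split; [exact hX|]); exists Z; split; eauto; exists G, D; auto.
    - intros [[hX [Z [[G [D [hG [hD hc]]]] hXZ]]]|[hX [Z [[G [D [hG [hD hc]]]] hXZ]]]];
        (split; [exact hX|]); exists Z; split; eauto; exists G, D; auto. }
  split.
  { intros L _ X. split; [|tauto]. intros [_ [Z [[G [D [[] _]]] _]]]. }
  split.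
  { intros L _ X. split; [|tauto]. intros [_ [Z [[G [D [_ [[] _]]]] _]]]. }
  split.
  { intros L hL X [h|h].
    - exists 1. split; [lia|]. apply mul_one_r'; [apply Rat_lang; exact hL|exact h].
    - destruct h as [hX [Z [[G [D [[n [hn hG]] [[m [hm hD]] hc]]]] hXZ]]].
      exists (n + m). split; [lia|]. apply lpow_mul; [apply Rat_lang; exact hL|exact hn|].
      split; [exact hX|]. exists Z. split; [|exact hXZ]. exists G, D. auto. }
  { intros L M hL hM hsub X [n [hn h]]. apply Rat_lang in hL.
    revert X h. induction n as [|n IH]; [lia|].
    destruct n as [|n].
    - intros X h. apply hsub. left. apply mul_one_r; auto.
    - intros X h. apply hsub. right. apply (lmul_mono L M (lpow L (S n)) M); [| |exact h].
      + intros Y h'. apply hsub. left. exact h'.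
      + intros Y hY. apply IH; [lia|exact hY]. }
Qed.
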